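(* Let $q\ge 2$ and $n\ge 2$ be integers and let $m=n-1$. Under uniform transmission over the $1$-deletion channel with input length $n$, $$\max_{{\boldsymbol y}\in\Sigma_q^{m}} \mathsf{H}^{\mathsf{In}}_{1\text{-}\mathsf{Del}}({\boldsymbol y}) = \log_2(nq)-\frac{2m}{nq},$$ and this maximum is attained only by channel outputs ${\boldsymbol y}$ with $\rho({\boldsymbol y})=m$ runs (i.e., all runs of length one).
   Context: $\Sigma_q=\{0,1,\dots,q-1\}$. For sequences ${\boldsymbol x}$ of length $N$ and ${\boldsymbol y}$ of length $\ell\le N$, the embedding number $\omega_{{\boldsymbol y}}({\boldsymbol x})$ is the number of index tuples $1\le i_1<\dots<i_\ell\le N$ with $x_{i_j}=y_j$ for all $j$. The $k$-deletion channel with input length $n$ maps ${\boldsymbol x}\in\Sigma_q^n$ to ${\boldsymbol y}\in\Sigma_q^{n-k}$ with probability $\Pr\{{\boldsymbol y}\mid{\boldsymbol x}\}=\omega_{{\boldsymbol y}}({\boldsymbol x})/\binom{n}{k}$ (exactly $k$ positions, chosen uniformly among the $\binom nk$ subsets, are deleted). Under uniform transmission, the input $X$ is uniform on $\Sigma_q^n$, and for an output ${\boldsymbol y}$ the input entropy is $\mathsf{H}^{\mathsf{In}}_{k\text{-}\mathsf{Del}}({\boldsymbol y})=H(X\mid Y={\boldsymbol y})=-\sum_{{\boldsymbol x}}P({\boldsymbol x}\mid{\boldsymbol y})\log_2 P({\boldsymbol x}\mid{\boldsymbol y})$ where $P({\boldsymbol x}\mid {\boldsymbol y})=\Pr\{{\boldsymbol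 y}\mid{\boldsymbol x}\}/\sum_{{\boldsymbol x}'\in\Sigma_q^n}\Pr\{{\boldsymbol y}\mid{\boldsymbol x}'\}$. A run of a sequence is a maximal block of identical consecutive symbols; $\rho({\boldsymbol y})$ is the number of runs of ${\boldsymbol y}$. *)

(* Defs.v *)
From HB Require Import structures.
From mathcomp Require Import all_boot all_order all_algebra.
From mathcomp Require Import reals exp.
Set Implicit Arguments. Unset Strict Implicit. Unset Printing Implicit Defensive.
Import Order.TTheory GRing.Theory Num.Theory.
Local Open Scope ring_scope.

Definition log2 {R : realType} (x : R) : R := ln x / ln 2.

Definition plogp {R : realType} (p : R) : R := if p == 0 then 0 else p * log2 p.

(* embedding number omega_y(x): number of index selections i_1 < ... < i_l
   (encoded as a bit mask of length |x| with exactly |y| ones) such that the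
   selected subsequence of x equals y. *)
Definition emb {T : eqType} (y x : seq T) : nat :=
  #|[pred b : (size x).-tuple bool | (count id b == size y) && (mask b x == y)]|.

Definition delPr {R : realType} {q n k : nat}
  (y : (n - k).-tuple 'I_q) (x : n.-tuple 'I_q) : R :=
  (emb y x)%:R / ('C(n, k))%:R.

(* posterior P(x | y) under uniform input *)
Definition post {R : realType} {q n k : nat}
  (y : (n - k).-tuple 'I_q) (x : n.-tuple 'I_q) : R :=
  delPr (R:=R) y x / \sum_(x' : n.-tuple 'I_q) delPr (R:=R) y x'.

(* input entropy H^In_{k-Del}(y) = H(X | Y = y) *)
Definition Hin {R : realType} (q n k : nat) (y : (n - k).-tuple 'I_q) : R :=
  - \sum_(x : n.-tuple 'I_q) plogp (post (R:=R) y x).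

Definition runs {T : eqType} (s : seq T) : nat :=
  if s is a :: t then (count id (pairmap (fun u v => u != v) a t)).+1 else 0.

(* Main.v *)
Require Import Defs.
From HB Require Import structures.
From mathcomp Require Import all_boot all_order all_algebra.
From mathcomp Require Import reals exp.
From mathcomp Require Import zify ring lra.
Set Implicit Arguments. Unset Strict Implicit. Unset Printing Implicit Defensive.
Import Order.TTheory GRing.Theory Num.Theory.


Definition ins {T : Type} (i : nat) (a : T) (s : seq T) := take i s ++ a :: drop i s.

Lemma ins0 T (a : T) s : ins 0 a s = a :: s.
Proof. by rewrite /ins take0 drop0. Qed.

Lemma insS T (a c : T) i s : ins i.+1 a (c :: s) = c :: ins i a s.
Proof. by []. Qed.

Lemma size_ins T i (a : T) s : size (ins i a s) = (size s).+1.
Proof. by rewrite /ins size_cat /= addnS -size_cat cat_take_drop. Qed.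

Lemma nth_ins T (a0 a : T) i s : i <= size s -> nth a0 (ins i a s) i = a.
Proof. by move=> h; rewrite /ins nth_cat size_take_min (minn_idPl h) ltnn subnn. Qed.

Lemma ins_inj2 T (a0 a a' : T) i s : i <= size s -> ins i a s = ins i a' s -> a = a'.
Proof. by move=> h e; rewrite -(nth_ins a0 a h) e nth_ins. Qed.

Lemma L1 T (a0 a : T) i s : i < size s -> nth a0 s i = a -> ins i a s = ins i.+1 a s.
Proof.
elim: s i => [|c s IH] [|i] //= h e.
- by rewrite ins0 insS ins0 e.
- by rewrite !insS (IH i h e).
Qed.

Lemma L2 T (a0 : T) s : forall i i' (a a' : T), ins i a s = ins i' a' s -> i < i' -> i' <= size s ->
  [/\ a = a', nth a0 s i = a & (i.+1 < i' -> nth a0 s i.+1 = a)].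
Proof.
elim: s => [|c s IH] i i' a a' //=.
- by case: i' => //; rewrite ltn0.
case: i => [|i]; case: i' => [|i'] //.
- rewrite ins0 insS => [[-> e]] _ hi.
  case: i' e hi => [|i'] e hi.
    by rewrite ins0 in e; case: e => ->.
  rewrite -ins0 in e.
  have [h1 h2 _] := IH _ _ _ _ e (isT : 0 < i'.+1) hi.
  by split=> // _; rewrite -h1 h2.
- rewrite !insS => [[e]] hii hi.
  have [h1 h2 h3] := IH _ _ _ _ e hii hi.
  by split.
Qed.


Definition Fins (T : finType) n (y : seq T) (p : 'I_n.+1 * T) : n.+1.-tuple T :=
  insubd (nseq_tuple n.+1 p.2) (ins p.1 p.2 y).

Lemma FinsE (T : finType) n (y : seq T) (p : 'I_n.+1 * T) : size y = n -> val (Fins y p) = ins p.1 p.2 y.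
Proof. by move=> hy; rewrite /Fins insubdK // unfold_in size_ins hy. Qed.

Lemma Fins_eq (T : finType) n (y : seq T) (p p' : 'I_n.+1 * T) : size y = n ->
  (Fins y p == Fins y p') = (ins p.1 p.2 y == ins p'.1 p'.2 y).
Proof. by move=> hy; rewrite -val_eqE /= !FinsE. Qed.

Definition NR (T : finType) n (a0 : T) (y : seq T) :=
  [set p : 'I_n.+1 * T | (p.1 == 0 :> nat) || (p.2 != nth a0 y p.1.-1)].

Lemma card_NR (T : finType) n (a0 : T) (y : seq T) : #|NR n a0 y| + n = n.+1 * #|T|.
Proof.
have e : ~: NR n a0 y = [set (lift ord0 j, nth a0 y j) | j : 'I_n].
  apply/setP => -[i a]; rewrite !inE /= negb_or negbK.
  apply/andP/imsetP => [[i0 /eqP ->]|[j _ [-> ->]]]; last by rewrite /= /bump /=.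
  have hi : i.-1 < n by rewrite -ltnS (@ltn_predK 0) ?lt0n.
  exists (Ordinal hi) => //; congr (_, _); apply: val_inj => /=.
  by rewrite /bump /= add1n (@ltn_predK 0) ?lt0n.
have := cardsC (NR n a0 y); rewrite e card_imset ?card_ord.
  by rewrite card_prod card_ord => ->.
by move=> j k [] ee _; apply: val_inj; move: ee; rewrite !add0n.
Qed.

Lemma img_NR (T : finType) n (a0 : T) (y : seq T) (p : 'I_n.+1 * T) : size y = n ->
  exists2 p', p' \in NR n a0 y & Fins y p' = Fins y p.
Proof.
move=> hy; case: p => [[k hk] a].
elim: k hk => [|k IH] hk.
  by exists (Ordinal hk, a) => //; rewrite inE.
case: (boolP (a == nth a0 y k)) => [/eqP ea|na]; last first.
  by exists (Ordinal hk, a) => //; rewrite inE /= na.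
have hk' : k < n.+1 by apply: ltnW.
have [p' p'in ep'] := IH hk'.
exists p' => //; rewrite ep'; apply/eqP; rewrite Fins_eq //=.
by rewrite (@L1 _ a0) // hy.
Qed.

Lemma card_img_le (T : finType) n (a0 : T) (y : seq T) : size y = n ->
  #|[set Fins y p | p : 'I_n.+1 * T]| <= #|NR n a0 y|.
Proof.
move=> hy; apply: leq_trans (leq_imset_card (Fins y) _).
apply: subset_leq_card; apply/subsetP => x /imsetP [p _ ->].
by have [p' p'in <-] := img_NR a0 p hy; apply: imset_f.
Qed.

Lemma E3 (T : finType) n (a0 : T) (y : seq T) j : size y = n -> j.+1 < n ->
  nth a0 y j = nth a0 y j.+1 ->
  exists p : 'I_n.+1 * T, 2 < #|[pred p' | Fins y p' == Fins y p]|.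
Proof.
move=> hy hj ej; set c := nth a0 y j.
have h0 : j <= n by apply: ltnW; apply: ltnW.
have h1 : j.+1 <= n by apply: ltnW.
have h2 : j.+2 <= n by [].
exists (inord j, c).
set s := [:: (inord j, c); (inord j.+1, c); (inord j.+2, c)] : seq ('I_n.+1 * T).
have us : uniq s.
  rewrite /s /= !inE !xpair_eqE eqxx !andbT -!val_eqE /= !inordK ?ltnS //.
  lia.
have := card_uniqP us; rewrite /= => <-.
apply: subset_leq_card; apply/subsetP => p; rewrite !inE => /or3P [] /eqP -> //=;
  rewrite Fins_eq //= !inordK ?ltnS //.
- by rewrite -(@L1 _ a0) // hy ltnW.
- rewrite -(@L1 _ a0) ?hy // -(@L1 _ a0) // hy ltnW //.
Qed.

Definition alt (T : eqType) (a0 : T) (y : seq T) :=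
  forall j, j.+1 < size y -> nth a0 y j != nth a0 y j.+1.

Lemma alt_step (T : finType) n (a0 : T) (y : seq T) i i' (a a' : T) :
  size y = n -> alt a0 y -> i < i' -> i' <= n -> ins i a y = ins i' a' y ->
  [/\ a = a', nth a0 y i = a & i' = i.+1].
Proof.
move=> hy ha hii hi e.
have [h1 h2 h3] := L2 a0 e hii (leq_trans hi (eq_leq (esym hy))).
split=> //; apply/eqP; rewrite eqn_leq hii andbT leqNgt; apply/negP => hlt.
have := ha i; rewrite hy (leq_trans hlt hi) h2 h3 // eqxx => /(_ isT).
by [].
Qed.

Lemma E2 (T : finType) n (a0 : T) (y : seq T) (p : 'I_n.+1 * T) : size y = n -> alt a0 y ->
  #|[pred p' | Fins y p' == Fins y p]| <= 2.
Proof.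
move=> hy ha; case: p => [i a].
pose p' : 'I_n.+1 * T := if (i < n) && (nth a0 y i == a) then (inord i.+1, a) else (inord i.-1, a).
apply: (@leq_trans #|[:: (i, a); p']|); last exact: card_size.
apply: subset_leq_card; apply/subsetP => -[i' a']; rewrite !inE Fins_eq //= => /eqP e.
have hi : i <= n by rewrite -ltnS.
have hi' : i' <= n by rewrite -ltnS.
case: (ltngtP i i') => hc.
- have [ea h2 h3] := alt_step hy ha hc hi' (esym e); subst a'.
  have hin : i < n by rewrite -ltnS -h3 ltnS.
  rewrite /p' hin h2 eqxx /=; apply/orP; right.
  by rewrite xpair_eqE eqxx andbT -val_eqE /= inordK ?h3.
- have [ea h2 h3] := alt_step hy ha hc hi e; subst a'.
  rewrite /p'; case: ifP => [/andP [hin /eqP hh]|_].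
    have := ha i'; rewrite hy -h3 hin h2 hh eqxx => /(_ isT); by [].
  apply/orP; right.
  by rewrite xpair_eqE eqxx andbT -val_eqE /= inordK h3 // (leq_trans (ltn_ord i)).
- have ei : i = i' by apply: val_inj.
  have hi2 : i <= size y by rewrite hy.
  rewrite -ei in e *; have := ins_inj2 a0 hi2 (esym e) => ->.
  by rewrite eqxx.
Qed.

Lemma inj_NR (T : finType) n (a0 : T) (y : seq T) : size y = n -> alt a0 y ->
  {in NR n a0 y &, injective (Fins y)}.
Proof.
move=> hy ha.
suff H : forall p p' : 'I_n.+1 * T, p' \in NR n a0 y -> p.1 < p'.1 ->
    Fins y p = Fins y p' -> False.
  move=> [i a] [i' a'] hp hp' /eqP e; rewrite Fins_eq //= in e.
  case: (ltngtP i i') => hc.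
  - by case: (H (i, a) (i', a')) => //; apply/eqP; rewrite Fins_eq.
  - by case: (H (i', a') (i, a)) => //; apply/eqP; rewrite Fins_eq // eq_sym.
  - have ei : i = i' by apply: val_inj.
    have hi2 : i <= size y by rewrite hy -ltnS.
    rewrite -ei in e *; have := ins_inj2 a0 hi2 (eqP e) => ->.
    by congr (_, _); apply: val_inj.
move=> [i a] [i' a'] hp' /= hc /eqP; rewrite Fins_eq //= => /eqP e.
have hi' : i' <= n by rewrite -ltnS.
have [ea h2 h3] := alt_step hy ha hc hi' e; subst a'.
by move: hp'; rewrite inE /= h3 /= h2 eqxx.
Qed.


Definition mkb (k i : nat) : seq bool := nseq i true ++ false :: nseq (k - i) true.

Lemma size_mkb k i : i <= k -> size (mkb k i) = k.+1.
Proof. by move=> h; rewrite /mkb size_cat /= !size_nseq; lia. Qed.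

Lemma count_mkb k i : i <= k -> count id (mkb k i) = k.
Proof. by move=> h; rewrite /mkb count_cat /= !count_nseq /=; lia. Qed.

Lemma index_mkb k i : index false (mkb k i) = i.
Proof. by rewrite /mkb; elim: i (k - i) => [|i IH] r //=; rewrite IH. Qed.

Lemma M1 T i (a : T) s : i <= size s -> mask (mkb (size s) i) (ins i a s) = s.
Proof.
move=> h; rewrite /mkb /ins mask_cat ?size_nseq ?size_takel // mask_true //=.
all: by rewrite ?mask_true ?cat_take_drop ?size_drop ?size_takel ?leqnn.
Qed.

Lemma M2 k (b : seq bool) : size b = k.+1 -> count id b = k -> b = mkb k (index false b).
Proof.
elim: b k => [|c b IH] k //= [hs]; rewrite /mkb.
case: c => /=.
- case: k hs => [|k] hs; first by case: b hs {IH} => //.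
  rewrite add1n => -[hc]; rewrite /= {1}(IH k hs hc) /mkb /=; congr (_ :: _).
- rewrite add0n => hc /=; rewrite subn0; congr (_ :: _).
  rewrite -hs; apply/all_pred1P; rewrite all_count; apply/eqP.
  by rewrite hs -hc; apply: eq_count => -[].
Qed.

Lemma M3 T (a0 : T) (x s : seq T) i : size x = (size s).+1 -> i <= size s ->
  mask (mkb (size s) i) x = s -> x = ins i (nth a0 x i) s.
Proof.
move=> hx hi hm.
have hix : i < size x by rewrite hx ltnS.
have ex : x = take i x ++ nth a0 x i :: drop i.+1 x by rewrite -drop_nth // cat_take_drop.
have hs : s = take i x ++ drop i.+1 x.
  rewrite -hm {1}ex /mkb mask_cat ?size_nseq ?size_takel ?(ltnW hix) //.
  rewrite [mask (nseq i true) _]mask_true ?size_takel ?(ltnW hix) //=.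
  by rewrite mask_true // size_drop hx; lia.
rewrite {1}ex /ins hs take_size_cat ?size_takel ?(ltnW hix) //.
by rewrite drop_size_cat // size_takel // ltnW.
Qed.


Definition mkT n (i : 'I_n.+1) : n.+1.-tuple bool := insubd (nseq_tuple n.+1 true) (mkb n i).

Lemma mkTE n (i : 'I_n.+1) : val (mkT i) = mkb n i.
Proof. by rewrite /mkT insubdK // unfold_in size_mkb // -ltnS. Qed.

Lemma emb_fiber (T : finType) n (y : seq T) (x : n.+1.-tuple T) : size y = n ->
  emb y x = #|[pred p : 'I_n.+1 * T | Fins y p == x]|.
Proof.
move=> hy; rewrite /emb size_tuple hy.
have -> : #|[pred p : 'I_n.+1 * T | Fins y p == x]| = #|[set p : 'I_n.+1 * T | Fins y p == x]|.
  by apply: eq_card => p; rewrite !inE.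
rewrite -(@card_in_imset _ _ (fun p : 'I_n.+1 * T => mkT p.1)).
  apply: eq_card => b; rewrite !inE; apply/andP/imsetP.
  - move=> [/eqP hc /eqP hm].
    have hb : size b = n.+1 by rewrite size_tuple.
    have eb := M2 hb hc.
    have hi : index false b < n.+1.
      by rewrite -[X in _ < X]hb index_mem eb /mkb mem_cat inE eqxx orbT.
    exists (Ordinal hi, tnth x (Ordinal hi)).
      rewrite inE; apply/eqP/val_inj.
      rewrite FinsE //= (tnth_nth (tnth x (Ordinal hi))) /=.
      have hm' : mask (mkb (size y) (index false b)) x = y by rewrite hy -eb.
      have hx : size x = (size y).+1 by rewrite size_tuple hy.
      have hi' : index false b <= size y by rewrite hy -ltnS.
      have := M3 (tnth x (Ordinal hi)) hx hi' hm'.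
      by move=> ee; rewrite [in RHS]ee.
    by apply: val_inj; rewrite /= mkTE /=.
  - move=> [[i a] /=]; rewrite inE => /eqP <- ->.
    have hi : i <= size y by rewrite hy -ltnS.
    rewrite mkTE count_mkb; last by rewrite -ltnS.
    by rewrite eqxx; split => //; rewrite FinsE //= -[X in mkb X]hy M1.
move=> [i a] [i' a']; rewrite !inE /= => /eqP e /eqP e' /(f_equal val).
rewrite /= !mkTE => /(f_equal (index false)); rewrite !index_mkb => /val_inj ei.
subst i'; congr (_, _).
have hi : i <= size y by rewrite hy -ltnS.
apply: (ins_inj2 a hi).
by have := FinsE (i, a) hy; have := FinsE (i, a') hy; rewrite e e' /= => <- <-.
Qed.

Local Open Scope ring_scope.

Lemma card_sumR (R : realType) (I : finType) (P : pred I) :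
  (#|P|%:R : R) = \sum_(i : I) (P i)%:R.
Proof.
rewrite -sum1_card natr_sum big_mkcond /=; apply: eq_bigr => i _.
by rewrite unfold_in; case: (P i).
Qed.

Lemma fiber_sum (R : realType) (I J : finType) (F : I -> J) (g : J -> R) :
  \sum_(x : J) #|[pred i | F i == x]|%:R * g x = \sum_(i : I) g (F i).
Proof.
under eq_bigr => x _ do rewrite card_sumR mulr_suml.
rewrite exchange_big /=; apply: eq_bigr => i _.
rewrite (bigD1 (F i)) //= eqxx mul1r big1 ?addr0 // => x /negbTE hx.
by rewrite eq_sym hx mul0r.
Qed.

Lemma inv_sum (R : realType) (I J : finType) (F : I -> J) :
  \sum_(i : I) (#|[pred i' | F i' == F i]|%:R : R)^-1 = #|[set F i | i : I]|%:R.
Proof.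
rewrite -(fiber_sum F (fun x => (#|[pred i' | F i' == x]|%:R : R)^-1)).
rewrite -sum1_card natr_sum [RHS]big_mkcond /=; apply: eq_bigr => x _.
case: (boolP (x \in [set F i | i : I])) => [/imsetP [i _ ->]|hx].
  by rewrite mulfV // pnatr_eq0 -lt0n; apply/card_gt0P; exists i; rewrite inE.
suff -> : #|[pred i' | F i' == x]| = 0%N by rewrite mul0r.
apply: eq_card0 => i; rewrite !inE; apply/negP => /eqP ei.
by move: hx; rewrite -ei imset_f.
Qed.


Lemma nat_pow_le e : (0 < e)%N -> (2 ^ (2 * e.-1) <= e ^ e)%N.
Proof.
case: e => [|[|[|[|e]]]] //= _.
rewrite expnM /=.
apply: (@leq_trans (4 ^ e.+4)); first by rewrite leq_exp2l.
by rewrite leq_exp2r.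
Qed.

Lemma nat_pow_lt e : (2 < e)%N -> (2 ^ (2 * e.-1) < e ^ e)%N.
Proof.
case: e => [|[|[|[|e]]]] //= _.
rewrite expnM /=.
apply: (@leq_trans (4 ^ e.+4)); first by rewrite ltn_exp2l.
by rewrite leq_exp2r.
Qed.

Lemma ln2_gt0 (R : realType) : 0 < ln (2 : R).
Proof. by apply: ln_gt0; rewrite ltr1n. Qed.

Lemma key_ineq (R : realType) e :
  (0 < e)%N -> (ln (e%:R : R)) * e%:R - (2 * e.-1)%:R * ln (2 : R) =
   ln ((e ^ e)%:R) - ln ((2 ^ (2 * e.-1))%:R).
Proof.
move=> he; rewrite !natrX !lnXn ?ltr0n // ?mulr_natr ?mulr_natl //.
Qed.

Lemma log_lb (R : realType) e : (0 < e)%N ->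
  2 * (1 - (e%:R : R)^-1) <= log2 (e%:R : R).
Proof.
move=> he.
have hE : 0 < (e%:R : R) by rewrite ltr0n.
have h1 : ln ((2 ^ (2 * e.-1))%:R) <= ln ((e ^ e)%:R : R).
  rewrite ler_ln ?posrE ?ltr0n ?expn_gt0 ?he //.
  by rewrite ler_nat nat_pow_le.
have := key_ineq R he; rewrite /log2.
have h2 := ln2_gt0 R.
have hE1 : (e.-1%:R : R) = e%:R - 1.
  by rewrite -[in RHS](ltn_predK he) -natr1 addrK.
move=> hk.
rewrite ler_pdivlMr // -(ler_pM2r hE).
have -> : 2 * (1 - (e%:R : R)^-1) * ln 2 * e%:R = (2 * e.-1)%:R * ln 2.
  rewrite natrM hE1; field; exact: lt0r_neq0.
lra.
Qed.

Lemma log_lt (R : realType) e : (2 < e)%N ->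
  2 * (1 - (e%:R : R)^-1) < log2 (e%:R : R).
Proof.
move=> he2; have he : (0 < e)%N by apply: leq_trans he2.
have hE : 0 < (e%:R : R) by rewrite ltr0n.
have h1 : ln ((2 ^ (2 * e.-1))%:R) < ln ((e ^ e)%:R : R).
  rewrite ltr_ln ?posrE ?ltr0n ?expn_gt0 ?he //.
  by rewrite ltr_nat nat_pow_lt.
have := key_ineq R he; rewrite /log2.
have h2 := ln2_gt0 R.
have hE1 : (e.-1%:R : R) = e%:R - 1.
  by rewrite -[in RHS](ltn_predK he) -natr1 addrK.
move=> hk.
rewrite ltr_pdivlMr // -(ltr_pM2r hE).
have -> : 2 * (1 - (e%:R : R)^-1) * ln 2 * e%:R = (2 * e.-1)%:R * ln 2.
  rewrite natrM hE1; field; exact: lt0r_neq0.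
lra.
Qed.

Lemma log_eq (R : realType) e : (0 < e)%N -> (e <= 2)%N ->
  2 * (1 - (e%:R : R)^-1) = log2 (e%:R : R).
Proof.
case: e => [|[|[|e]]] //= _ _; rewrite /log2.
  by rewrite invr1 subrr mulr0 ln1 mul0r.
rewrite divff; last exact: lt0r_neq0 (ln2_gt0 R).
rewrite mulrBr mulr1 divff ?pnatr_eq0 //; lra.
Qed.


Lemma plogp_nat (R : realType) (e N : nat) : (0 < N)%N ->
  plogp ((e%:R : R) / N%:R) = e%:R * (log2 (e%:R : R) / N%:R) - e%:R * (log2 (N%:R : R) / N%:R).
Proof.
move=> hN; have hNR : 0 < (N%:R : R) by rewrite ltr0n.
rewrite /plogp; case: (posnP e) => [->|he].
  by rewrite mul0r eqxx !mul0r subrr.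
have heR : 0 < (e%:R : R) by rewrite ltr0n.
have h0 : (e%:R : R) / N%:R != 0 by rewrite mulf_neq0 ?invr_eq0 ?lt0r_neq0.
rewrite (negbTE h0) /log2 ln_div ?posrE //.
have := ln2_gt0 R => h2.
field; rewrite ?lt0r_neq0 //.
Qed.

Lemma Hin_formula (R : realType) q n (y : (n.+1 - 1).-tuple 'I_q) : (0 < q)%N ->
  @Hin R q n.+1 1 y = log2 ((n.+1 * q)%:R) -
    (\sum_(p : 'I_n.+1 * 'I_q) log2 (#|[pred p' | Fins y p' == Fins y p]|%:R : R)) / (n.+1 * q)%:R.
Proof.
move=> hq.
have hy : size y = n by rewrite size_tuple subn1.
set N := (n.+1 * q)%N.
have hN : (0 < N)%N by rewrite muln_gt0 hq.
have hNR : 0 < (N%:R : R) by rewrite ltr0n.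
have hsum : \sum_(x : n.+1.-tuple 'I_q) ((emb y x)%:R : R) = N%:R.
  under eq_bigr => x _ do rewrite (emb_fiber x hy) -[_%:R]mulr1.
  rewrite (fiber_sum (Fins y) (fun _ => 1)) sumr_const card_prod !card_ord.
  by [].
have hpost : forall x, post (R:=R) y x = (emb y x)%:R / N%:R.
  move=> x; rewrite /post /delPr bin1 -mulr_suml hsum.
  have hn : 0 < (n.+1%:R : R) by rewrite ltr0n.
  field; rewrite (lt0r_neq0 hNR) /=; apply/negP => /eqP h.
  by have := ler0n R n; lra.
rewrite /Hin.
under eq_bigr => x _ do rewrite hpost plogp_nat // (emb_fiber x hy).
rewrite sumrB.
rewrite (fiber_sum (Fins y) (fun x => log2 (#|[pred p' | Fins y p' == x]|%:R : R) / N%:R)).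
rewrite (fiber_sum (Fins y) (fun x => log2 (N%:R : R) / N%:R)).
rewrite -mulr_suml sumr_const card_prod !card_ord -/N.
rewrite opprB; congr (_ - _).
rewrite -mulr_natl; field; exact: lt0r_neq0.
Qed.


Definition Ep (T : finType) n (y : seq T) (p : 'I_n.+1 * T) :=
  #|[pred p' | Fins y p' == Fins y p]|.

Lemma Ep_gt0 (T : finType) n (y : seq T) (p : 'I_n.+1 * T) : (0 < Ep y p)%N.
Proof. by apply/card_gt0P; exists p; rewrite inE. Qed.

Lemma S_decomp (R : realType) (T : finType) n (y : seq T) :
  \sum_(p : 'I_n.+1 * T) log2 ((Ep y p)%:R : R) =
  \sum_(p : 'I_n.+1 * T) (log2 ((Ep y p)%:R : R) - 2 * (1 - ((Ep y p)%:R)^-1))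
  + 2 * (n.+1 * #|T|)%:R - 2 * #|[set Fins y p | p : 'I_n.+1 * T]|%:R.
Proof.
rewrite sumrB -mulr_sumr sumrB sumr_const card_prod card_ord.
rewrite /Ep (inv_sum R (Fins y)) natrM mulr_natl.
lra.
Qed.

Lemma S_ge (R : realType) (T : finType) n (a0 : T) (y : seq T) : size y = n ->
  let S := \sum_(p : 'I_n.+1 * T) log2 ((Ep y p)%:R : R) in
  [/\ 2 * n%:R <= S,
      (exists j, (j.+1 < n)%N /\ nth a0 y j = nth a0 y j.+1) -> 2 * n%:R < S &
      alt a0 y -> S = 2 * n%:R].
Proof.
move=> hy S.
have hD : forall p : 'I_n.+1 * T, 0 <= log2 ((Ep y p)%:R : R) - 2 * (1 - ((Ep y p)%:R)^-1).
  by move=> p; rewrite subr_ge0 log_lb // Ep_gt0.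
have hNR : (#|NR n a0 y|%:R : R) = (n.+1 * #|T|)%:R - n%:R.
  by rewrite -(card_NR n a0 y) natrD addrK.
have himg : (#|[set Fins y p | p : 'I_n.+1 * T]|%:R : R) <= #|NR n a0 y|%:R.
  by rewrite ler_nat card_img_le.
have hsum := sumr_ge0 _ (fun p _ => hD p) : 0 <= \sum_(p : 'I_n.+1 * T) _.
rewrite /S S_decomp; split.
- lra.
- move=> [j [hj ej]].
  have [p hp] := E3 hy hj ej.
  have hDp : 0 < log2 ((Ep y p)%:R : R) - 2 * (1 - ((Ep y p)%:R)^-1).
    by rewrite subr_gt0 log_lt.
  rewrite (bigD1 p) //= in hsum *.
  have : 0 <= \sum_(i | i != p) (log2 ((Ep y i)%:R : R) - 2 * (1 - ((Ep y i)%:R)^-1)).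
    by apply: sumr_ge0 => i _; exact: hD.
  lra.
- move=> ha.
  have h0 : forall p : 'I_n.+1 * T, log2 ((Ep y p)%:R : R) - 2 * (1 - ((Ep y p)%:R)^-1) = 0.
    by move=> p; rewrite log_eq ?subrr ?Ep_gt0 // (E2 p hy ha).
  rewrite big1 ?add0r; last by move=> p _; exact: h0.
  have himg2 : (#|NR n a0 y|%:R : R) <= #|[set Fins y p | p : 'I_n.+1 * T]|%:R.
    rewrite ler_nat -(card_in_imset (inj_NR hy ha)).
    by apply: subset_leq_card; apply/subsetP => x /imsetP [p _ ->]; apply: imset_f.
  lra.
Qed.


Lemma runs_alt (T : eqType) (a0 : T) (y : seq T) : alt a0 y -> runs y = size y.
Proof.
case: y => [|a t] //= ha; congr (_.+1).
elim: t a ha => [|b t IH] a ha //=.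
have hab : a != b by have := ha 0%N; rewrite /= => /(_ isT).
rewrite hab add1n IH // => j hj.
by have := ha j.+1 hj.
Qed.

Theorem theorem5 (R : realType) (q n : nat) :
  (2 <= q)%N -> (2 <= n)%N ->
  let m := (n - 1)%N in
  let v : R := log2 ((n * q)%:R) - (2 * m)%:R / (n * q)%:R in
  (exists y : m.-tuple 'I_q, @Hin R q n 1 y = v) /\
  (forall y : m.-tuple 'I_q, @Hin R q n 1 y <= v) /\
  (forall y : m.-tuple 'I_q, @Hin R q n 1 y = v -> runs y = m).
Proof.
case: q => [|q] // hq; case: n => [|n] // hn m v.
have hm : m = n := subn1 n.+1.
have hN : 0 < ((n.+1 * q.+1)%N%:R : R) by rewrite ltr0n muln_gt0.
have hv : v = log2 ((n.+1 * q.+1)%:R) - (2 * n%:R) / (n.+1 * q.+1)%:R.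
  by rewrite /v hm [(2 * n)%:R]natrM.
have HF : forall y : m.-tuple 'I_q.+1, @Hin R q.+1 n.+1 1 y =
    log2 ((n.+1 * q.+1)%:R) - (\sum_(p : 'I_n.+1 * 'I_q.+1) log2 ((Ep y p)%:R : R)) / (n.+1 * q.+1)%:R.
  by move=> y; rewrite Hin_formula.
have hy : forall y : m.-tuple 'I_q.+1, size y = n by move=> y; rewrite size_tuple.
split; [|split].
- pose s := mkseq (fun k => (inord (k %% 2) : 'I_q.+1)) m.
  have hs : size s == m by rewrite size_mkseq.
  exists (Tuple hs).
  have ha : alt ord0 (Tuple hs).
    move=> j /=; rewrite size_mkseq => hj.
    rewrite !nth_mkseq ?(ltnW hj) // -val_eqE /=.
    rewrite !inordK ?(leq_trans (ltn_pmod _ _) hq) // !modn2 /=.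
    by case: (odd j).
  have [_ _ h3] := S_ge R ord0 (hy (Tuple hs)).
  by rewrite HF hv h3.
- move=> y; have [h1 _ _] := S_ge R ord0 (hy y).
  rewrite HF hv lerD2l lerN2 ler_pM2r ?invr_gt0 //.
- move=> y; have [_ h2 _] := S_ge R ord0 (hy y).
  case: (boolP [exists j : 'I_n, (j.+1 < n)%N && (nth ord0 y j == nth ord0 y j.+1)]).
    move=> /existsP [j /andP [hj /eqP ej]] he.
    have h2' := h2 (ex_intro _ (nat_of_ord j) (conj hj ej)).
    have hlt : 2 * n%:R / (n.+1 * q.+1)%:R <
        (\sum_(p : 'I_n.+1 * 'I_q.+1) log2 ((Ep y p)%:R : R)) / (n.+1 * q.+1)%:R.
      by rewrite ltr_pM2r ?invr_gt0.
    by move: he; rewrite HF hv => /addrI /oppr_inj he; move: hlt; rewrite he ltxx.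
  move=> hne _; rewrite (@runs_alt _ ord0) ?hy ?hm // => j; rewrite hy => hj.
  apply/negP => /eqP ej; move/negP: hne; apply.
  have hj' : (j < n)%N by apply: ltnW.
  by apply/existsP; exists (Ordinal hj'); rewrite /= hj ej eqxx.
Qed.
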